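(* Let $(L,\preceq)$ be a lattice and let $\mathrm{LCon}\,L$ be the set of all local congruences on $L$, ordered by inclusion $\sqsubseteq$. Then $(\mathrm{LCon}\,L,\sqsubseteq)$ is a complete lattice, whose least element is $\delta_\bot=\{(a,a)\mid a\in L\}$ and whose greatest element is $\delta_\top=\{(a,b)\mid a,b\in L\}$.
   Context: A local congruence on a lattice $(L,\preceq)$ is an equivalence relation on $L$ each of whose equivalence classes is a sublattice of $L$ and is convex (if $u,v$ are in the class and $u\preceq w\preceq v$, then $w$ is in the class). For equivalence relations $\rho_1,\rho_2$ on $L$, $\rho_1\sqsubseteq\rho_2$ means that every equivalence class of $\rho_1$ is contained in some equivalence class of $\rho_2$ (equivalently $\rho_1\subseteq\rho_2$ as sets of pairs). *)

(* Defs.v *)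
From HB Require Import structures.
From mathcomp Require Import all_boot all_order.
Set Implicit Arguments. Unset Strict Implicit. Unset Printing Implicit Defensive.
Import Order.Theory.
Local Open Scope order_scope.

Definition relation (T : Type) := T -> T -> Prop.

Definition equivalence_rel (T : Type) (rho : relation T) : Prop :=
  (forall x, rho x x) /\
  (forall x y, rho x y -> rho y x) /\
  (forall x y z, rho x y -> rho y z -> rho x z).

Definition eq_class (T : Type) (rho : relation T) (a : T) : T -> Prop :=
  fun x => rho a x.

Definition is_sublattice d (L : latticeType d) (A : L -> Prop) : Prop :=
  forall x y, A x -> A y -> A (x `&` y) /\ A (x `|` y).

Definition is_convex d (L : latticeType d) (A : L -> Prop) : Prop :=
  forall u v w, A u -> A v -> u <= w -> w <= v -> A w.

Definition local_congruence d (L : latticeType d) (rho : relation L) : Prop :=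
  equivalence_rel rho /\
  (forall a, is_sublattice (eq_class rho a) /\ is_convex (eq_class rho a)).

Definition rel_le (T : Type) (r1 r2 : relation T) : Prop :=
  forall x y, r1 x y -> r2 x y.

Definition delta_bot (T : Type) : relation T := fun a b => a = b.
Definition delta_top (T : Type) : relation T := fun _ _ => True.

Definition is_lcon_sup d (L : latticeType d) (S : relation L -> Prop)
  (s : relation L) : Prop :=
  local_congruence s /\ (forall r, S r -> rel_le r s) /\
  (forall t, local_congruence t -> (forall r, S r -> rel_le r t) -> rel_le s t).

Definition is_lcon_inf d (L : latticeType d) (S : relation L -> Prop)
  (s : relation L) : Prop :=
  local_congruence s /\ (forall r, S r -> rel_le s r) /\
  (forall t, local_congruence t -> (forall r, S r -> rel_le t r) -> rel_le t s).

(* Main.v *)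
Require Import Defs.
From HB Require Import structures.
From mathcomp Require Import all_boot all_order.
Import Order.Theory.
Local Open Scope order_scope.

Definition rinf {T : Type} (F : relation T -> Prop) : relation T :=
  fun x y => forall r, F r -> r x y.

Lemma rinf_lc d (L : latticeType d) (F : relation L -> Prop) :
  (forall r, F r -> local_congruence r) -> local_congruence (rinf F).
Proof.
move=> H; split; [split; [|split]|].
- by move=> x r /H [[? _] _].
- by move=> x y Hxy r Fr; have [[_ [Hs _]] _] := H r Fr; exact: Hs (Hxy r Fr).
- by move=> x y z Hxy Hyz r Fr; have [[_ [_ Ht]] _] := H r Fr; exact: Ht (Hxy r Fr) (Hyz r Fr).
- move=> a; split.
  + move=> x y Hx Hy; split=> r Fr; have [_ Hc] := H r Fr;
    have [Hs _] := Hc a; have [? ?] := Hs x y (Hx r Fr) (Hy r Fr); done.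
  + move=> u v w Hu Hv uw wv r Fr; have [_ Hc] := H r Fr;
    have [_ Hv'] := Hc a; exact: Hv' u v w (Hu r Fr) (Hv r Fr) uw wv.
Qed.

Lemma top_lc d (L : latticeType d) : local_congruence (@delta_top L).
Proof. by split; [split; [|split]|] => //; split. Qed.

Theorem theorem5p2 (d : Order.disp_t) (L : latticeType d) :
  (* (LCon L, ⊑) is a complete lattice: every family of local congruences
     has a supremum and an infimum in LCon L *)
  (forall S : relation L -> Prop, (forall r, S r -> local_congruence r) ->
     (exists s, is_lcon_sup S s) /\ (exists i, is_lcon_inf S i)) /\
  (* δ_⊥ is the least element *)
  local_congruence (@delta_bot L) /\
  (forall rho, local_congruence rho -> rel_le (@delta_bot L) rho) /\
  (* δ_⊤ is the greatest element *)
  local_congruence (@delta_top L) /\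
  (forall rho, local_congruence rho -> rel_le rho (@delta_top L)).
Proof.
split; [|split; [|split; [|split]]].
- move=> S HS; split.
  + exists (rinf (fun t => local_congruence t /\ forall r, S r -> rel_le r t)).
    split; [apply: rinf_lc => r []; done|split].
    * by move=> r Sr x y rxy t [_ Ht]; exact: Ht r Sr x y rxy.
    * by move=> t Ht Hub x y Hxy; exact: Hxy t (conj Ht Hub).
  + exists (rinf S); split; [exact: rinf_lc|split].
    * by move=> r Sr x y Hxy; exact: Hxy r Sr.
    * by move=> t _ Ht x y txy r Sr; exact: Ht r Sr x y txy.
- split; [split; [|split]|].
  + by [].
  + by move=> x y ->.
  + by move=> x y z -> ->.
  + move=> a; split.
    * by move=> x y <- <-; rewrite /eq_class meetxx joinxx.
    * move=> u v w <- <- uw wv; apply/le_anti; rewrite /eq_class in uw wv *.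
      by rewrite uw wv.
- by move=> rho [[Hr _] _] x y ->; exact: Hr.
- exact: top_lc.
- by [].
Qed.
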